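(* Let $n\ge2$ and let $G$ be a finite simple graph with independence number $n$. Let $P_G(z)=I_G(z)-1$. If the Julia set $\mathcal{J}(P_G)$ (the independence fractal of $G$) is a circle, then $G=K_n^c$ (the graph on $n$ vertices with no edges) and the circle is $\{z\in\mathbb{C}: |z+1|=1\}$.
   Context: For a finite simple graph $G$, the independence polynomial is $I_G(z)=\sum_{i=0}^{\alpha} a_i z^i$, where $a_i$ is the number of sets of $i$ pairwise non-adjacent vertices and the independence number $\alpha$ is the largest such $i$. $P_G=I_G-1$ is the reduced independence polynomial. For a polynomial $P$ of degree at least two, the Julia set $\mathcal{J}(P)$ is the boundary of $\{z: (P^n(z))_{n>0}\text{ bounded}\}$. For $G\neq K_1$ the independence fractal $\mathcal{F}(G)$ of $G$ equals $\mathcal{J}(P_G)$. *)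

(* Defs.v *)
From HB Require Import structures.
From mathcomp Require Import all_boot all_order all_algebra.
From mathcomp Require Import complex.
From mathcomp Require Import reals.
Set Implicit Arguments. Unset Strict Implicit. Unset Printing Implicit Defensive.
Import Order.TTheory GRing.Theory Num.Theory.
Local Open Scope ring_scope.
Local Open Scope complex_scope.

Definition simple_graph (T : finType) (e : rel T) : Prop :=
  symmetric e /\ irreflexive e.

Definition independent (T : finType) (e : rel T) (A : {set T}) : bool :=
  [forall x in A, forall y in A, ~~ e x y].

Definition indep_number (T : finType) (e : rel T) : nat :=
  \max_(A : {set T} | independent e A) #|A|.

Definition indep_count (T : finType) (e : rel T) (i : nat) : nat :=
  #|[set A : {set T} | independent e A & #|A| == i]|.

Definition indep_poly (R : nzRingType) (T : finType) (e : rel T) : {poly R} :=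
  \sum_(i < (indep_number e).+1) (indep_count e i)%:R *: 'X^i.

Definition red_indep_poly (R : nzRingType) (T : finType) (e : rel T) : {poly R} :=
  indep_poly R e - 1.

Definition filled_julia (R : realType) (p : {poly R[i]}) : R[i] -> Prop :=
  fun z => exists M : R, forall k : nat, `|iter k (fun w => p.[w]) z| <= M%:C.

Definition boundary (R : realType) (S : R[i] -> Prop) : R[i] -> Prop :=
  fun z => forall eps : R, 0 < eps ->
    (exists w, S w /\ `|w - z| < eps%:C) /\ (exists w, ~ S w /\ `|w - z| < eps%:C).

Definition julia (R : realType) (p : {poly R[i]}) : R[i] -> Prop :=
  boundary (filled_julia p).

Definition is_circle (R : realType) (S : R[i] -> Prop) : Prop :=
  exists (c : R[i]) (r : R), 0 < r /\ forall z, S z <-> `|z - c| = r%:C.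

(* Main.v *)
Require Import Defs.
From HB Require Import structures.
From mathcomp Require Import all_boot all_order all_algebra.
From mathcomp Require Import complex.
From mathcomp Require Import reals.
From mathcomp Require Import ring lra.
Import Order.TTheory GRing.Theory Num.Theory.
Local Open Scope ring_scope.
Local Open Scope complex_scope.

Section A.
Variable R : realType.

Definition cw (t : nat) : R[i] := (1 +i* t%:R).
Definition cpt (t : nat) : R[i] := cw t / (cw t)^*.

Lemma cw_neq0 t : cw t != 0.
Proof. by rewrite eq_complex /= oner_eq0. Qed.

Lemma norm_cpt t : `|cpt t| = 1.
Proof.
rewrite /cpt normrM normfV normcJ mulfV // normr_eq0; exact: cw_neq0.
Qed.

Lemma cpt_inj : injective cpt.
Proof.
move=> s t; rewrite /cpt => h.
have hs := cw_neq0 s; have ht := cw_neq0 t.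
have hs' : (cw s)^* != 0 by rewrite conjc_eq0.
have ht' : (cw t)^* != 0 by rewrite conjc_eq0.
move/eqP: h; rewrite eqr_div // /cw /= => /eqP; simpc => /eqP.
rewrite eq_complex /= => /andP [_ /eqP h].
have : (s%:R : R) = t%:R by lra.
by move/eqP; rewrite eqr_nat => /eqP.
Qed.

Lemma circle_mono (S : {poly R[i]}) (rho : R[i]) : 0 < rho ->
  (forall u, `|u| = rho -> `|S.[u]| = rho) ->
  S = (S`_(size S).-1) *: 'X^((size S).-1).
Proof.
move=> rho_gt0 hS.
have rho0 : rho != 0 by rewrite gt_eqF.
set d := (size S).-1.
have Sn0 : S != 0.
  apply/eqP=> S0; move: (hS rho (gtr0_norm rho_gt0)); rewrite S0 horner0 normr0.
  by move=> h; move: rho0; rewrite -h eqxx.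
have sizeS : size S = d.+1 by rewrite /d prednK // size_poly_gt0.
have sd : S`_d != 0 by rewrite -lead_coefE lead_coef_eq0.
pose Rv := \sum_(j < d.+1) (((S`_j)^* * rho^+(2*j)) *: 'X^(d - j)).
have evalR : forall u, `|u| = rho -> S.[u] * Rv.[u] = rho^+2 * u^+d.
  move=> u hu.
  have hSu : S.[u] = \sum_(j < d.+1) S`_j * u^+j by rewrite horner_coef sizeS.
  have hRv : Rv.[u] = u^+d * (S.[u])^*.
    rewrite hSu rmorph_sum mulr_sumr horner_sum; apply: eq_bigr => j _.
    rewrite hornerZ hornerXn rmorphM rmorphXn /=.
    have hj : (j <= d)%N by rewrite -ltnS.
    have ed : u^+d = u^+j * u^+(d-j) by rewrite -exprD subnKC.
    by rewrite exprM -hu sqr_normc exprMn ed; ring.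
  rewrite hRv mulrCA -sqr_normc (hS u hu) mulrC.
  by [].
pose D := S * Rv - (rho^+2) *: 'X^d.
have D0 : D = 0.
  apply: (@roots_geq_poly_eq0 _ D [seq rho * cpt t | t <- iota 0 (size D)]).
  - apply/allP => x /mapP [t _ ->]; rewrite /root /D hornerD hornerN hornerM hornerZ hornerXn.
    rewrite evalR ?subrr // normrM norm_cpt mulr1 gtr0_norm //.
  - rewrite map_inj_uniq ?iota_uniq // => s t /(mulfI rho0); exact: cpt_inj.
  - by rewrite size_map size_iota.
have Rv0 : Rv`_0 = (S`_d)^* * rho^+(2*d).
  rewrite coef_sum big_ord_recr /= big1 => [|j _].
    by rewrite coefZ coefXn subnn eqxx mulr1 add0r.
  by rewrite coefZ coefXn eq_sym subn_eq0 leqNgt ltn_ord mulr0.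
have Rv0n : Rv`_0 != 0 by rewrite Rv0 mulf_neq0 ?conjc_eq0 ?expf_neq0.
have coefs : forall j, (j < d)%N -> S`_j = 0.
  elim/ltn_ind=> j IH hj.
  have : (S * Rv)`_j = 0.
    move/eqP: D0; rewrite /D subr_eq0 => /eqP ->.
    by rewrite coefZ coefXn (ltn_eqF hj) mulr0.
  rewrite coefM big_ord_recr /= big1 => [|k _].
    by rewrite add0r subnn => /eqP; rewrite mulf_eq0 (negbTE Rv0n) orbF => /eqP.
  by rewrite IH ?mul0r // (ltn_trans _ hj).
apply/polyP => j; rewrite coefZ coefXn.
case: (ltngtP j d) => hj.
- by rewrite coefs // mulr0.
- by rewrite mulr0 nth_default // sizeS.
- by rewrite hj mulr1.
Qed.
End A.
Section B.
Variable R : realType.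

Definition nr (x : R[i]) : R := Num.sqrt (complex.Re x ^+ 2 + complex.Im x ^+ 2).
Lemma nrE x : `|x| = (nr x)%:C. Proof. by rewrite normc_def. Qed.
Lemma nr_ge0 x : 0 <= nr x. Proof. exact: sqrtr_ge0. Qed.

Lemma poly_lip (p : {poly R[i]}) (z : R[i]) : exists L : R, 0 <= L /\
  forall w, `|w - z| <= 1 -> `|p.[w] - p.[z]| <= L%:C * `|w - z|.
Proof.
elim/poly_ind: p => [|p c [L [L0 IH]]].
  by exists 0; split=> // w _; rewrite !horner0 subrr normr0 mul0r.
exists (L * (nr z + 1) + nr p.[z]); split.
  by apply: addr_ge0; [apply: mulr_ge0 => //; apply: addr_ge0 => //; apply: nr_ge0|apply: nr_ge0].
move=> w hw; rewrite !hornerMXaddC.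
have -> : p.[w] * w + c - (p.[z] * z + c) = (p.[w] - p.[z]) * w + p.[z] * (w - z) by ring.
rewrite rmorphD rmorphM rmorphD /= -!nrE.
apply: (le_trans (ler_normD _ _)); rewrite !normrM mulrDl.
apply: lerD => //.
have hwz : `|w| <= `|z| + 1.
  have -> : w = (w - z) + z by ring.
  apply: (le_trans (ler_normD _ _)); rewrite [`|z| + 1]addrC.
  exact: lerD.
rewrite rmorph1 mulrAC.
apply: ler_pM => //; exact: IH.
Qed.

Lemma poly_cont (p : {poly R[i]}) (z : R[i]) (eps : R) : 0 < eps ->
  exists delta : R, 0 < delta /\ forall w, `|w - z| < delta%:C -> `|p.[w] - p.[z]| < eps%:C.
Proof.
move=> eps0; have [L [L0 HL]] := poly_lip p z.
have L1 : 0 < L + 1 by lra.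
pose delta := Num.min 1 (eps / (L + 1)).
have d0 : 0 < delta by rewrite lt_min ltr01 divr_gt0.
have d1 : delta <= 1 by rewrite ge_min lexx.
have d2 : delta <= eps / (L + 1) by rewrite ge_min lexx orbT.
have d3 : L * delta < eps.
  have : (L + 1) * delta <= eps by rewrite -ler_pdivlMl // mulrC.
  lra.
exists delta; split => // w hw.
have hw1 : `|w - z| <= 1.
  by apply: (le_trans (ltW hw)); rewrite -(rmorph1 (real_complex R)) lecR.
apply: (le_lt_trans (HL w hw1)).
apply: (le_lt_trans (y := L%:C * delta%:C)).
  by apply: ler_wpM2l; [rewrite ler0c | exact: ltW].
by rewrite -rmorphM ltcR.
Qed.

Lemma fj_fwd (p : {poly R[i]}) z : filled_julia p z -> filled_julia p p.[z].
Proof. by move=> [M HM]; exists M => k; have := HM k.+1; rewrite iterSr. Qed.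

Lemma fj_bwd (p : {poly R[i]}) z : filled_julia p p.[z] -> filled_julia p z.
Proof.
move=> [M HM]; exists (Num.max M (nr z)) => -[|k].
  by rewrite /= nrE lecR le_max lexx orbT.
rewrite iterSr; apply: (le_trans (HM k)).
by rewrite lecR le_max lexx.
Qed.

Lemma julia_fwd (p : {poly R[i]}) z : julia p z -> julia p p.[z].
Proof.
move=> hz eps eps0.
have [delta [d0 hd]] := @poly_cont p z eps eps0.
have [[w [w1 w2]] [v [v1 v2]]] := hz delta d0.
split.
  exists p.[w]; split; first exact: fj_fwd.
  by rewrite hd.
exists p.[v]; split; first by move=> /fj_bwd.
by rewrite hd.
Qed.
End B.
Lemma indep_set0 (T : finType) (e : rel T) : independent e set0.
Proof. by apply/forall_inP => x; rewrite in_set0. Qed.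

Lemma indep_le (T : finType) (e : rel T) A : independent e A -> (#|A| <= indep_number e)%N.
Proof. by move=> hA; rewrite /indep_number; apply: (leq_bigmax_cond (P := independent e)). Qed.

Lemma indep_max (T : finType) (e : rel T) : exists A, independent e A /\ #|A| = indep_number e.
Proof.
have : (0 < #|[pred A : {set T} | independent e A]|)%N.
  by apply/card_gt0P; exists set0; rewrite inE indep_set0.
move=> /(eq_bigmax_cond (fun A : {set T} => #|A|)) [A hA eA].
by exists A; split; [move: hA; rewrite inE | rewrite -eA].
Qed.

Lemma count_all (T : finType) (e : rel T) i :
  (forall A : {set T}, #|A| = i -> independent e A) -> indep_count e i = 'C(#|T|, i).
Proof.
move=> h; rewrite /indep_count -card_draws; apply: eq_card => A.
by rewrite !inE; case: eqP => [/h ->|]; rewrite ?andbF.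
Qed.

Lemma count0 (T : finType) (e : rel T) : indep_count e 0 = 1%N.
Proof.
rewrite count_all ?bin0 // => A /eqP; rewrite cards_eq0 => /eqP ->; exact: indep_set0.
Qed.

Lemma count1 (T : finType) (e : rel T) : irreflexive e -> indep_count e 1 = #|T|.
Proof.
move=> irr; rewrite count_all ?bin1 // => A /eqP /cards1P [a ->].
by apply/forall_inP => x /set1P -> ; apply/forall_inP => y /set1P ->; rewrite irr.
Qed.

Lemma coef_XaddCn (F : comNzRingType) (a : F) n j :
  (('X + a%:P)^+n)`_j = a^+(n-j) *+ 'C(n,j).
Proof.
elim: n j => [|n IH] j.
  by rewrite expr0 coef1 bin0n; case: j.
rewrite exprS mulrDl coefD coefXM coefCM; case: j => [|j] /=.
  by rewrite add0r IH !bin0 !subn0 exprS.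
rewrite !IH binS mulrnDr subSS addrC; congr (_ + _).
case: (ltnP j n) => hj.
  by rewrite mulrnAr -exprS subnSK.
by rewrite bin_small ?ltnS // !mulr0n mulr0.
Qed.

Theorem lemma3p2 (R : realType) (n : nat) (T : finType) (e : rel T) :
  simple_graph e ->
  (2 <= n)%N ->
  indep_number e = n ->
  is_circle (julia (red_indep_poly R[i] e)) ->
  (#|T| = n /\ forall x y : T, ~~ e x y) /\
  (forall z : R[i], julia (red_indep_poly R[i] e) z <-> `|z + 1| = 1).
Proof.
move=> [sym irr] n2 hN [c [r [r0 hJ]]].
set P := red_indep_poly R[i] e.
pose a i := indep_count e i.
have hP : P = \poly_(i < n.+1) (a i)%:R - 1.
  by rewrite /P /red_indep_poly /indep_poly poly_def hN.
have coefP : forall j, P`_j = (if (j < n.+1)%N then (a j)%:R else 0) - (j == 0%N)%:R.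
  by move=> j; rewrite hP coefB coef_poly coef1.
have [A [indA cardA]] := @indep_max _ e; rewrite hN in cardA.
have an : (0 < a n)%N.
  by apply/card_gt0P; exists A; rewrite inE indA cardA eqxx.
have sizeP : size P = n.+1.
  have sz : size (\poly_(i < n.+1) (a i)%:R : {poly R[i]}) = n.+1.
    by rewrite size_poly_eq //= pnatr_eq0 -lt0n.
  by rewrite hP size_polyDl sz // size_polyN size_poly1 ltnS ltnW.
pose S := P \Po ('X + c%:P) - c%:P.
have hS : forall u, `|u| = r%:C -> `|S.[u]| = r%:C.
  move=> u hu; have : julia P (u + c) by apply/hJ; rewrite addrK.
  move/julia_fwd/hJ => h.
  by rewrite hornerD hornerN horner_comp (hornerD 'X) hornerX !hornerC.
have sizeS : size S = n.+1.
  have s1 : size (P \Po ('X + c%:P)) = n.+1 by rewrite size_comp_poly2 ?size_XaddC.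
  rewrite /S size_polyDl s1 // size_polyN (leq_ltn_trans (size_polyC_leq1 _)) //.
  by rewrite ltnS ltnW.
have rC : 0 < r%:C by rewrite -(rmorph0 (real_complex R)) ltcR.
have Sform := @circle_mono R S (r%:C) rC hS.
rewrite sizeS /= in Sform.
set k := S`_n in Sform.
have PS : P = k *: ('X + (- c)%:P)^+n + c%:P.
  have e1 : S \Po ('X - c%:P) = P - c%:P.
    rewrite /S comp_polyB comp_polyC -comp_polyA (comp_polyD 'X) comp_polyX comp_polyC.
    by rewrite subrK comp_polyXr.
  by rewrite -[P](subrK c%:P) -e1 Sform comp_polyZ comp_Xn_poly polyCN.
have cP : forall j, P`_j = k * ((- c)^+(n - j) *+ 'C(n, j)) + (if j == 0%N then c else 0).
  by move=> j; rewrite PS coefD coefZ coef_XaddCn coefC.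
have n0 : (0 < n)%N by apply: ltnW.
have e0 : k * (- c)^+n = - c.
  have := cP 0%N; rewrite coefP /a /= count0 subn0 bin0 mulr1n subrr => h.
  by apply/eqP; rewrite -subr_eq0 opprK eq_sym h.
have e1 : (#|T|%:R : R[i]) = k * ((- c)^+(n - 1) *+ n).
  have := cP 1%N; rewrite coefP /a /= count1 // bin1 subr0 addr0.
  by rewrite ltnS n0.
have Tn : (n <= #|T|)%N by rewrite -cardA max_card.
have c0 : - c != 0.
  apply/eqP => c0; move: e1; rewrite c0 expr0n /= subn_eq0 leqNgt n2 mul0rn mulr0.
  by move/eqP; rewrite pnatr_eq0 -leqn0 leqNgt (leq_trans _ Tn).
have k1 : k * (- c)^+(n - 1) = 1.
  apply: (mulIf c0); rewrite mul1r -mulrA -exprSr subn1 prednK //.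
have hT : #|T| = n.
  by apply/eqP; rewrite -(eqr_nat R[i]) e1 mulrnAr k1.
have hA : A = setT.
  by apply/eqP; rewrite eqEcard subsetT /= cardsT cardA -hT.
have noedge : forall x y : T, ~~ e x y.
  move=> x y; move: indA; rewrite hA => /forall_inP /(_ x (in_setT x)).
  by move/forall_inP /(_ y (in_setT y)).
split=> //.
have allind : forall i, a i = 'C(n, i).
  move=> i; rewrite /a /= count_all ?hT // => B _.
  by apply/forall_inP => x _; apply/forall_inP => y _; apply: noedge.
have kk : k = 1.
  have := cP n; rewrite coefP ltnSn allind binn subnn expr0 mulr1n mulr1.
  by rewrite eqn0Ngt n0 /= subr0 addr0 => <-.
have cm1 : c = - 1.
  have := cP n.-1; rewrite coefP ltnS leq_pred allind -subn1 bin_sub ?leq_subr //.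
  rewrite subKn // bin1 kk mul1r expr1 eqn0Ngt subn_gt0 n2 /= subr0 addr0.
  move=> h; have nz : (n%:R : R[i]) != 0 by rewrite pnatr_eq0 -lt0n.
  have h2 : - c = 1 by apply: (mulIf nz); rewrite mulr_natr mul1r h.
  by rewrite -[c]opprK h2.
have r1 : r = 1.
  have := hS (r%:C) (gtr0_norm rC).
  rewrite Sform kk scale1r hornerXn normrX gtr0_norm // -rmorphXn /= => /complexI.

  move=> h; have rn0 : r != 0 by rewrite gt_eqF.
  have h' : r ^+ (n - 1) * r = 1 * r by rewrite -exprSr subn1 prednK // h mul1r.
  have := mulIf rn0 h'.
  by move/eqP; rewrite pexpr_eq1 ?subn_gt0 ?ltW // => /eqP.
move=> z; rewrite hJ cm1 r1 opprK rmorph1.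
by [].
Qed.
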